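(* For all partial Boolean functions $f:D\to\{0,1\}$ with $D\subseteq\{0,1\}^n$, we have $\mathrm{QS}(f)=O(\mathrm{RS}(f))$.
   Context: Quantum query model: for $x\in\{0,1\}^n$ the oracle $O_x$ acts by $O_x|i,b\rangle=|i,b\oplus x_i\rangle$. A $T$-query quantum algorithm applies input-independent unitaries $U_0,\dots,U_T$ interleaved with $O_x$ to $|0^m\rangle$ and may output the state obtained by tracing out a fixed subset of qubits. The trace distance is $\|\rho-\sigma\|_{tr}=\tfrac12\|\rho-\sigma\|_1$. $\mathrm{QS}(f)$ is the smallest $k$ such that some $k$-query quantum algorithm outputs states $\rho_x$ ($x\in D$) with $\|\rho_x-\rho_y\|_{tr}\ge 1/6$ whenever $f(x)\ne f(y)$. Sabotaged inputs: for $x,y\in D$ with $f(x)\ne f(y)$, let $p\in\{0,1,*\}^n$ have $p_i=x_i$ if $x_i=y_i$ and $p_i=*$ otherwise. Let $S_*$ be the set of all such $p$, and let $S_\dagger\subseteq\{0,1,\dagger\}^n$ be the same set with $*$ replaced by $\dagger$. Let $f_{\mathrm{sab}}:S_*\cup S_\dagger\to\{0,1\}$ output whether its input contains $*$ symbols or $\dagger$ symbols. $\mathrm{R}_0(g)$ is the minimum, over zero-error randomized query algorithms for $g$ (always correct), of the worst-case expected number of queries. The randomized sabotage complexity is $\mathrm{RS}(f)=\mathrm{R}_0(f_{\mathrm{sab}})$. *)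

(* Defs.v *)
From HB Require Import structures.
From mathcomp Require Import all_boot all_order all_algebra.
From mathcomp Require Import classical_sets reals.
From mathcomp Require Import complex.
From Stdlib Require List.

Set Implicit Arguments.
Unset Strict Implicit.
Unset Printing Implicit Defensive.

Import Order.TTheory GRing.Theory Num.Theory Num.Def.
Local Open Scope ring_scope.

Section TraceNorm.
Variable C : numClosedFieldType.

Definition adjmx (m : nat) (A : 'M[C]_m) : 'M[C]_m := (map_mx Num.conj A)^T.

(* the eigenvalues (with multiplicity) of a square matrix: the roots of its
   characteristic polynomial, which splits since C is algebraically closed *)
Definition eigenvalues (m : nat) (A : 'M[C]_m) : seq C :=
  projT1 (closed_field_poly_normal (char_poly A)).

(* trace norm ||A||_1 = tr sqrt(A^* A) = sum of the singular values of A *)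
Definition trace_norm (m : nat) (A : 'M[C]_m) : C :=
  \sum_(z <- eigenvalues (adjmx A *m A)) 2.-root z.

End TraceNorm.

Section Quantum.
Variable R : realType.
Local Notation C := R[i].
Variable n : nat.

(* Registers: query index register 'I_n.+1 (index n is a padding value on
   which the oracle acts trivially), query answer bit, and a workspace
   'I_a.+1 * 'I_b.+1; at the end the 'I_b.+1 part is traced out. *)
Definition kept_space (a : nat) := ('I_n.+1 * bool * 'I_a.+1)%type.
Definition qspace (a b : nat) := ('I_n.+1 * bool * ('I_a.+1 * 'I_b.+1))%type.

Variables a b : nat.
Local Notation S := (qspace a b).
Local Notation K := (kept_space a).

Definition apply_op (U : S -> S -> C) (v : S -> C) : S -> C :=
  fun s => \sum_(t : S) U s t * v t.

Definition unitary (U : S -> S -> C) : Prop :=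
  forall s t : S, \sum_(u : S) Num.conj (U u s) * U u t = (s == t)%:R.

Definition oracle_map (x : {ffun 'I_n -> bool}) (s : S) : S :=
  match s with
  | (i, c, z) =>
      match unlift ord_max i with
      | Some j => (i, c (+) x j, z)
      | None => (i, c, z)
      end
  end.

Definition oracle (x : {ffun 'I_n -> bool}) : S -> S -> C :=
  fun s t => (s == oracle_map x t)%:R.

Definition init_state : S -> C :=
  fun s => (s == (ord0, false, (ord0, ord0)))%:R.

Fixpoint run (U : nat -> S -> S -> C) (x : {ffun 'I_n -> bool}) (t : nat)
  : S -> C :=
  match t with
  | 0 => apply_op (U 0%N) init_state
  | t'.+1 => apply_op (U t) (apply_op (oracle x) (run U x t'))
  end.

Definition reduced_state (psi : S -> C) : 'M[C]_#|{: K}| :=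
  \matrix_(i, j)
    let k := enum_val i in let k' := enum_val j in
    \sum_(c : 'I_b.+1) psi (k.1, (k.2, c)) * Num.conj (psi (k'.1, (k'.2, c))).

Definition output_state (U : nat -> S -> S -> C) (T : nat)
  (x : {ffun 'I_n -> bool}) : 'M[C]_#|{: K}| :=
  reduced_state (run U x T).

End Quantum.

Definition trace_dist (C : numClosedFieldType) (m : nat) (rho sigma : 'M[C]_m) : C :=
  (trace_norm (rho - sigma)) / 2.

Definition QS_algorithm_exists (R : realType) (n : nat)
  (D : {set {ffun 'I_n -> bool}}) (f : {ffun 'I_n -> bool} -> bool) (T : nat)
  : Prop :=
  exists (a b : nat) (U : nat -> qspace n a b -> qspace n a b -> R[i]),
    (forall t, (t <= T)%N -> unitary (U t)) /\
    forall x y, x \in D -> y \in D -> f x != f y ->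
      1 / 6 <= trace_dist (output_state U T x) (output_state U T y).

Definition QS (R : realType) (n : nat) (D : {set {ffun 'I_n -> bool}})
  (f : {ffun 'I_n -> bool} -> bool) : R :=
  inf [set (T%:R : R) | T in [set T : nat | QS_algorithm_exists R D f T]].

Inductive sym := sym0 | sym1 | symstar | symdag.

Definition sym_to_ord (s : sym) : 'I_4 :=
  match s with
  | sym0 => inord 0 | sym1 => inord 1 | symstar => inord 2 | symdag => inord 3
  end.
Definition ord_to_sym (i : 'I_4) : sym :=
  match val i with 0 => sym0 | 1 => sym1 | 2 => symstar | _ => symdag end.
Lemma sym_to_ordK : cancel sym_to_ord ord_to_sym.
Proof. by case; rewrite /ord_to_sym /= inordK. Qed.

HB.instance Definition _ := Finite.copy sym (can_type sym_to_ordK).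

Definition of_bool (c : bool) : sym := if c then sym1 else sym0.

Definition sabotage (n : nat) (x y : {ffun 'I_n -> bool}) (s : sym)
  : {ffun 'I_n -> sym} :=
  [ffun i => if x i == y i then of_bool (x i) else s].

Definition sab_domain (n : nat) (D : {set {ffun 'I_n -> bool}})
  (f : {ffun 'I_n -> bool} -> bool) : {set {ffun 'I_n -> sym}} :=
  [set z | [exists x in D, exists y in D,
             (f x != f y) &&
             ((z == sabotage x y symstar) || (z == sabotage x y symdag))]].

Definition f_sab (n : nat) (z : {ffun 'I_n -> sym}) : bool :=
  [exists i, z i == symstar].

Inductive dtree (n : nat) :=
  | Leaf of bool
  | Query of 'I_n & (sym -> dtree n).

Fixpoint dt_eval (n : nat) (t : dtree n) (z : {ffun 'I_n -> sym}) : bool :=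
  match t with
  | Leaf c => c
  | Query i k => dt_eval (k (z i)) z
  end.

Fixpoint dt_cost (n : nat) (t : dtree n) (z : {ffun 'I_n -> sym}) : nat :=
  match t with
  | Leaf _ => 0
  | Query i k => (dt_cost (k (z i)) z).+1
  end.

(* a randomized query algorithm: a finitely supported probability
   distribution over deterministic decision trees *)
Definition rand_alg (R : realType) (n : nat) := seq (R * dtree n).

Definition zero_error_alg (R : realType) (n : nat) (A : rand_alg R n)
  (dom : {set {ffun 'I_n -> sym}}) (g : {ffun 'I_n -> sym} -> bool) : Prop :=
  (forall p, List.In p A -> 0 <= p.1) /\
  \sum_(p <- A) p.1 = 1 /\
  (forall p, List.In p A -> 0 < p.1 -> forall z, z \in dom -> dt_eval p.2 z = g z).

Definition expected_cost (R : realType) (n : nat) (A : rand_alg R n)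
  (z : {ffun 'I_n -> sym}) : R :=
  \sum_(p <- A) p.1 * (dt_cost p.2 z)%:R.

Definition worst_expected_cost (R : realType) (n : nat) (A : rand_alg R n)
  (dom : {set {ffun 'I_n -> sym}}) : R :=
  \big[Num.max/0]_(z in dom) expected_cost A z.

Definition R0 (R : realType) (n : nat) (dom : {set {ffun 'I_n -> sym}})
  (g : {ffun 'I_n -> sym} -> bool) : R :=
  inf [set worst_expected_cost A dom | A in [set A : rand_alg R n |
                                               zero_error_alg A dom g]].

Definition RS (R : realType) (n : nat) (D : {set {ffun 'I_n -> bool}})
  (f : {ffun 'I_n -> bool} -> bool) : R :=
  R0 R (sab_domain D f) (@f_sab n).

(* Main.v *)
Require Import Defs.
From mathcomp Require Import all_boot all_order all_algebra.
From mathcomp Require Import classical_sets reals.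
From mathcomp Require Import complex.
From mathcomp Require Import ring lra.
Import Order.TTheory GRing.Theory Num.Theory.
Local Open Scope ring_scope.

Set Implicit Arguments.
Unset Strict Implicit.
Unset Printing Implicit Defensive.

Section Ops.
Variable R : realType.
Local Notation C := R[i].
Variables n a b : nat.
Local Notation S := (qspace n a b).

Definition perm_op (pi : S -> S) : S -> S -> C := fun s t => (s == pi t)%:R.

Lemma sum_pick (F : S -> C) s0 : \sum_t (t == s0)%:R * F t = F s0.
Proof.
rewrite (bigD1 s0) //= eqxx mul1r big1 ?addr0 // => t /negbTE ->; by rewrite mul0r.
Qed.

Lemma sum_pick' (F : S -> C) s0 : \sum_t (s0 == t)%:R * F t = F s0.
Proof.
rewrite -(sum_pick F s0); apply: eq_bigr => t _; by rewrite eq_sym.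
Qed.

Lemma perm_op_unitary pi : injective pi -> unitary (perm_op pi).
Proof.
move=> inj s t; rewrite /perm_op.
under eq_bigr => u _ do rewrite rmorph_nat.
rewrite sum_pick; by rewrite (inj_eq inj).
Qed.

Lemma apply_perm (I : finType) pi (sigma : I -> S) (g : I -> C) s :
  apply_op (perm_op pi) (fun s => \sum_v (s == sigma v)%:R * g v) s =
  \sum_v (s == pi (sigma v))%:R * g v.
Proof.
rewrite /apply_op /perm_op.
under eq_bigr => t _ do rewrite mulr_sumr.
rewrite exchange_big /=; apply: eq_bigr => v _.
under eq_bigr => t _ do rewrite mulrCA.
exact: (sum_pick (fun t => (s == pi t)%:R * g v)).
Qed.

Definition hh (w : S -> C) : S -> S -> C :=
  fun s t => (s == t)%:R - w s * Num.conj (w t).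

Lemma hh_unitary w : \sum_u Num.conj (w u) * w u = 2 -> unitary (hh w).
Proof.
move=> N2 s t; rewrite /hh.
under eq_bigr => u _ do rewrite rmorphB rmorph_nat rmorphM.
have cc : forall z : C, Num.conj (Num.conj z) = z by move=> z; exact: conjCK.
under eq_bigr => u _ do rewrite /= cc mulrBl !mulrBr.
rewrite !sumrB.
rewrite sum_pick.
have -> : \sum_i (i == s)%:R * (w i * Num.conj (w t)) = w s * Num.conj (w t).
  by rewrite (sum_pick (fun i => w i * Num.conj (w t))).
have -> : \sum_i Num.conj (w i) * w s * (i == t)%:R = Num.conj (w t) * w s.
  rewrite -(sum_pick (fun i => Num.conj (w i) * w s) t).
  by apply: eq_bigr => i _; rewrite mulrC.
have -> : \sum_i Num.conj (w i) * w s * (w i * Num.conj (w t)) = 2 * (w s * Num.conj (w t)).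
  rewrite -N2 mulr_suml; apply: eq_bigr => i _.
  by rewrite mulrA -[_ * w s * w i]mulrA [w s * w i]mulrC !mulrA.
rewrite (mulrC (Num.conj (w t))) mulr2n.
rewrite mulrDl mul1r; set z := w s * _.
by ring.
Qed.

End Ops.

Lemma trace_norm_diag (C : numClosedFieldType) m (M : 'M[C]_m) :
  (forall i j, i != j -> M i j = 0) -> trace_norm M = \sum_i `|M i i|.
Proof.
move=> Md.
set P := adjmx M *m M.
have Pd : forall i j, P i j = (i == j)%:R * (Num.conj (M i i) * M i i).
  move=> i j; rewrite /P /adjmx !mxE.
  rewrite (bigD1 i) //= big1 ?addr0.
    rewrite !mxE; case: (eqVneq i j) => [<-|ij]; first by rewrite mul1r.
    by rewrite (Md i j ij) mulr0 mul0r.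
  move=> k ki; rewrite !mxE (Md k i ki).
  by rewrite conjC0 mul0r.
have Ptrig : is_trig_mx P.
  apply/is_trig_mxP => i j ij; rewrite Pd.
  suff -> : (i == j) = false by rewrite mul0r.
  by rewrite -val_eqE /= ltn_eqF.
have cp := char_poly_trig Ptrig.
rewrite /trace_norm /eigenvalues.
case: closed_field_poly_normal => s /= Hs.
have lc : lead_coef (char_poly P) = 1.
  by rewrite cp; apply/monicP; apply: monic_prod_XsubC.
rewrite lc scale1r cp in Hs.
have pe : perm_eq s [seq P i i | i <- enum 'I_m].
  apply: prod_XsubC_eq; rewrite -Hs big_map big_enum //=.
rewrite (perm_big _ pe) /= big_map big_enum /=.
apply: eq_bigr => i _; rewrite Pd eqxx mul1r -normCKC sqrCK //.
Qed.

Fixpoint nextq n (t : dtree n) (ans : nat -> bool) (k : nat) : 'I_n.+1 :=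
  match t with
  | Leaf _ => ord_max
  | Query i f => match k with
                 | 0 => lift ord_max i
                 | k'.+1 => nextq (f (of_bool (ans 0%N))) (fun s => ans s.+1) k'
                 end
  end.

Fixpoint trueans n (t : dtree n) (x : {ffun 'I_n -> bool}) (k : nat) : bool :=
  match t with
  | Leaf _ => false
  | Query i f => match k with
                 | 0 => x i
                 | k'.+1 => trueans (f (of_bool (x i))) x k'
                 end
  end.

Definition qans n (x : {ffun 'I_n -> bool}) (q : 'I_n.+1) : bool :=
  if unlift ord_max q is Some j then x j else false.

Lemma nextq_ext n (t : dtree n) ans1 ans2 k :
  (forall s, (s < k)%N -> ans1 s = ans2 s) -> nextq t ans1 k = nextq t ans2 k.
Proof.
elim: k t ans1 ans2 => [|k IH] [c|i f] ans1 ans2 H //=.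
rewrite H //; apply: IH => s sk; exact: H.
Qed.

Lemma qans_true n (t : dtree n) x k : qans x (nextq t (trueans t x) k) = trueans t x k.
Proof.
elim: k t => [|k IH] [c|i f] /=; rewrite /qans ?unlift_none ?liftK //.
exact: IH.
Qed.

Lemma om_eq n a b (x : {ffun 'I_n -> bool}) q c (z : 'I_a.+1 * 'I_b.+1) :
  oracle_map x ((q, c), z) = ((q, c (+) qans x q), z).
Proof. by rewrite /oracle_map /qans; case: unlift => //=; rewrite addbF. Qed.

Section Sim.
Variable R : realType.
Local Notation C := R[i].
Variables n T b : nat.
Variable tr : 'I_b.+1 -> dtree n.
Variable p : 'I_b.+1 -> R.

Definition W := ('I_b.+1 * {ffun 'I_T -> bool})%type.
Definition aW := #|{: W}|.
Local Notation S := (qspace n aW b).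
Local Notation K := (kept_space n aW).

Definition encW (w : W) : 'I_aW.+1 := lift ord0 (enum_rank w).

Lemma encW_inj : injective encW.
Proof. by move=> w1 w2 /lift_inj /enum_rank_inj. Qed.

Definition ansn (ans : {ffun 'I_T -> bool}) (s : nat) : bool :=
  if (insub s : option 'I_T) is Some u then ans u else false.

Definition Ast x v (t : nat) : {ffun 'I_T -> bool} :=
  [ffun u : 'I_T => (u < t)%N && trueans (tr v) x u].

Lemma ansn_Ast x v t s : (s < T)%N -> ansn (Ast x v t) s = (s < t)%N && trueans (tr v) x s.
Proof. by move=> sT; rewrite /ansn insubT /= ffunE. Qed.

Definition kap x t v : K :=
  ((nextq (tr v) (ansn (Ast x v t)) t, false), encW (v, Ast x v t)).

Definition sigma x t v : S := ((kap x t v).1, ((kap x t v).2, v)).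

Definition stepf (r : nat) (s : S) : S :=
  let: ((i, c), (k, v)) := s in
  match unlift ord0 k with
  | None => s
  | Some e =>
    let: (j, ans) := enum_val e in
    let ans' := [ffun u : 'I_T => if val u == r then ans u (+) c else ans u] in
    let c' := c (+) ansn ans' r in
    let i' := i - nextq (tr j) (ansn ans') r + nextq (tr j) (ansn ans') r.+1 in
    ((i', c'), (encW (j, ans'), v))
  end.

Lemma stepf_inj r : injective (stepf r).
Proof.
move=> [[i1 c1] [k1 v1]] [[i2 c2] [k2 v2]] /=.
case: (unliftP ord0 k1) => [e1 ->|->]; case: (unliftP ord0 k2) => [e2 ->|->] //.
- case V1: (enum_val e1) => [j1 ans1]; case V2: (enum_val e2) => [j2 ans2].
  move=> E; have Ek := congr1 (fun s => s.2.1) E; have Ec := congr1 (fun s => s.1.2) E.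
  have Ei := congr1 (fun s => s.1.1) E; have Ev := congr1 (fun s => s.2.2) E.
  simpl in Ek, Ec, Ei, Ev; subst v2; clear E.
  have [Ej Ea] := encW_inj Ek; subst j2.
  move: Ec; rewrite (congr1 (fun A => ansn A r) Ea) => /addIb Ec; subst c2.
  have Eans : ans1 = ans2.
    apply/ffunP => u; move/ffunP: Ea => /(_ u); rewrite !ffunE.
    by case: ifP => _ // /addIb.
  subst ans2; rewrite -V2 in V1; move/enum_val_inj: V1 => ->.
  move: Ei; rewrite (congr1 (fun A => nextq (tr j1) (ansn A) r) Ea).
  rewrite (congr1 (fun A => nextq (tr j1) (ansn A) r.+1) Ea) => /addIr /subIr ->; done.
- case: (enum_val e1) => j1 ans1 E; have := congr1 (fun s => s.2.1) E.
  by rewrite /= /encW => /eqP; rewrite eq_sym (negbTE (neq_lift _ _)).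
- case: (enum_val e2) => j2 ans2 E; have := congr1 (fun s => s.2.1) E.
  by rewrite /= /encW => /eqP; rewrite (negbTE (neq_lift _ _)).
Qed.


Definition sigma0 v : S :=
  ((nextq (tr v) (fun _ => false) 0, false), (encW (v, [ffun => false]), v)).

Lemma sigma_0 x v : sigma x 0 v = sigma0 v.
Proof.
rewrite /sigma /sigma0 /kap /=.
have -> : Ast x v 0 = [ffun => false] by apply/ffunP => u; rewrite !ffunE.
by case: (tr v).
Qed.

Definition g v : C := (Num.sqrt (p v))%:C%C.
Definition s0 : S := ((ord0, false), (ord0, ord0)).
Definition psi0 (s : S) : C := \sum_v (s == sigma0 v)%:R * g v.
Definition w0 (s : S) : C := (s == s0)%:R - psi0 s.
Definition Ualg (t : nat) : S -> S -> C :=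
  if t is t'.+1 then @perm_op R _ _ _ (stepf t') else hh w0.

Lemma psi_single (sig : 'I_b.+1 -> S) (h : 'I_b.+1 -> C) :
  (forall v, (sig v).2.2 = v) ->
  forall s, \sum_v (s == sig v)%:R * h v = (s == sig s.2.2)%:R * h s.2.2.
Proof.
move=> Hs s; rewrite (bigD1 s.2.2) //= big1 ?addr0 // => v vs.
suff -> : (s == sig v) = false by rewrite mul0r.
apply/negbTE/eqP => E; move/eqP: vs; apply; by rewrite E Hs.
Qed.

Lemma sum_single (sig : 'I_b.+1 -> S) (h : 'I_b.+1 -> C) :
  (forall v, (sig v).2.2 = v) ->
  \sum_s (s == sig s.2.2)%:R * h s.2.2 = \sum_v h v.
Proof.
move=> Hs; under eq_bigr => s _ do rewrite -(psi_single h Hs s).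
rewrite exchange_big /=; apply: eq_bigr => v _.
exact: (sum_pick (fun s => h v) (sig v)).
Qed.

Hypothesis p0 : forall v, 0 <= p v.
Hypothesis p1 : \sum_v p v = 1.

Lemma gg v : Num.conj (g v) * g v = (p v)%:C%C.
Proof.
rewrite /g geC0_conj ?ler0c ?sqrtr_ge0 // -rmorphM -expr2 sqr_sqrtr //.
Qed.

Lemma conj_nat_mul (c : bool) (z : C) :
  Num.conj ((c)%:R * z) * ((c)%:R * z) = (c)%:R * (Num.conj z * z).
Proof. by case: c; rewrite ?mul1r ?mul0r ?rmorph0 ?mul0r // rmorph1 mul1r. Qed.

Lemma psi0_norm : \sum_s Num.conj (psi0 s) * psi0 s = 1.
Proof.
have Hs : forall v, (sigma0 v).2.2 = v by [].
rewrite /psi0; under eq_bigr => s _ do rewrite (psi_single g Hs s) conj_nat_mul.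
rewrite (sum_single (fun v => Num.conj (g v) * g v) Hs).
under eq_bigr => v _ do rewrite gg.
by rewrite -rmorph_sum p1.
Qed.

Lemma psi0_s0 : psi0 s0 = 0.
Proof.
have Hs : forall v, (sigma0 v).2.2 = v by [].
rewrite /psi0 (psi_single g Hs s0).
suff -> : (s0 == sigma0 s0.2.2) = false by rewrite mul0r.
apply/negbTE; rewrite /s0 /sigma0 /encW /= !xpair_eqE /=.
by rewrite !andbF.
Qed.

Lemma w0_norm : \sum_u Num.conj (w0 u) * w0 u = 2.
Proof.
rewrite /w0.
under eq_bigr => u _ do rewrite rmorphB rmorph_nat mulrBl !mulrBr.
rewrite !sumrB.
rewrite (sum_pick (fun u => (u == s0)%:R) s0) eqxx.
rewrite (sum_pick psi0 s0) psi0_s0.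
have -> : \sum_i Num.conj (psi0 i) * (i == s0)%:R = 0.
  transitivity (Num.conj (psi0 s0)); last by rewrite psi0_s0 conjC0.
  rewrite -(sum_pick (fun i => Num.conj (psi0 i)) s0).
  by apply: eq_bigr => i _; rewrite mulrC.
rewrite /= psi0_norm; by rewrite !subr0 sub0r opprK.
Qed.

Lemma U0_init s : apply_op (Ualg 0) (@init_state R n aW b) s = psi0 s.
Proof.
rewrite /apply_op /init_state /=.
under eq_bigr => t _ do rewrite mulrC.
rewrite (sum_pick (fun t => hh w0 s t) s0) /hh /w0 eqxx psi0_s0 subr0 rmorph1 mulr1.
by rewrite opprB addrC subrK.
Qed.

Lemma Ualg_unitary t : unitary (Ualg t).
Proof.
case: t => [|t] /=; first exact: hh_unitary w0_norm.
exact/perm_op_unitary/stepf_inj.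
Qed.


Lemma step_sigma x t v : (t < T)%N -> stepf t (oracle_map x (sigma x t v)) = sigma x t.+1 v.
Proof.
move=> tT.
set q := nextq (tr v) (ansn (Ast x v t)) t.
have -> : oracle_map x (sigma x t v) = ((q, qans x q), (encW (v, Ast x v t), v)).
  by rewrite /sigma /kap /= /qans -/q; case: unlift.
rewrite /sigma /kap /stepf /encW liftK /= enum_rankK /=.
have Hq : q = nextq (tr v) (trueans (tr v) x) t.
  apply: nextq_ext => s st; rewrite ansn_Ast ?st //; exact: ltn_trans st tT.
have Ans : [ffun u : 'I_T => if val u == t then Ast x v t u (+) qans x q
            else Ast x v t u] = Ast x v t.+1.
  apply/ffunP => u; rewrite !ffunE.
  case: eqP => [ut|/eqP ut].
    by rewrite ut ltnn ltnSn /= Hq qans_true.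
  have ut' : (u : nat) != t := ut.
  by rewrite [(u < t.+1)%N]ltnS [(u <= t)%N]leq_eqVlt (negbTE ut').
rewrite Ans.
have E1 : nextq (tr v) (ansn (Ast x v t.+1)) t = q.
  apply: nextq_ext => s st; have sT : (s < T)%N by exact: ltn_trans st tT.
  by rewrite !ansn_Ast // st ltnS ltnW.
have E2 : ansn (Ast x v t.+1) t = qans x q by rewrite ansn_Ast // ltnSn Hq qans_true.
by rewrite E1 E2 subrr add0r addbb.
Qed.

Lemma apply_op_ext (U : S -> S -> C) F1 F2 s :
  (forall u, F1 u = F2 u) -> apply_op U F1 s = apply_op U F2 s.
Proof. by move=> H; apply: eq_bigr => u _; rewrite H. Qed.

Lemma run_eq x t : (t <= T)%N ->
  forall s, run Ualg x t s = \sum_v (s == sigma x t v)%:R * g v.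
Proof.
elim: t => [|t IH] tT s /=.
  rewrite U0_init /psi0; apply: eq_bigr => v _; by rewrite sigma_0.
have tT' : (t < T)%N by [].
transitivity (apply_op (Ualg t.+1)
   (fun u => \sum_v (u == oracle_map x (sigma x t v))%:R * g v) s).
  apply: apply_op_ext => u.
  transitivity (apply_op (@oracle R n aW b x) (fun u => \sum_v (u == sigma x t v)%:R * g v) u).
    by apply: apply_op_ext => w; rewrite IH // ltnW.
  exact: (apply_perm (oracle_map x) (sigma x t) g u).
rewrite (apply_perm (stepf t) (fun v => oracle_map x (sigma x t v)) g s).
by apply: eq_bigr => v _; rewrite step_sigma.
Qed.

Lemma key_eq x t (k : K) c : ((k.1, (k.2, c)) == sigma x t c) = (k == kap x t c).
Proof.
rewrite /sigma; case: k => k1 k2; case: (kap x t c) => a1 a2 /=.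
by rewrite !xpair_eqE eqxx andbT.
Qed.

Lemma out_entry x i j : output_state Ualg T x i j =
  \sum_c ((enum_val i == kap x T c) && (enum_val j == kap x T c))%:R * (p c)%:C%C.
Proof.
have Hs : forall v, (sigma x T v).2.2 = v by [].
rewrite /output_state /reduced_state mxE; apply: eq_bigr => c _.
rewrite !(run_eq x (leqnn T)) !(psi_single g Hs) /= !key_eq.
case: (enum_val i == kap x T c); case: (enum_val j == kap x T c);
  rewrite ?mul1r ?mul0r ?rmorph0 ?mulr0 ?rmorph1 ?mul1r //.
by rewrite mulrC gg.
Qed.

Lemma pick_enum (F : K -> C) k :
  \sum_(i < #|{: K}|) (enum_val i == k)%:R * F (enum_val i) = F k.
Proof.
rewrite (bigD1 (enum_rank k)) //= enum_rankK eqxx mul1r big1 ?addr0 // => i ne.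
suff -> : (enum_val i == k) = false by rewrite mul0r.
apply/negbTE/eqP => E; move/eqP: ne; apply; by rewrite -E enum_valK.
Qed.

Lemma rho_ii z i : output_state Ualg T z i i =
  \sum_c (enum_val i == kap z T c)%:R * (p c)%:C%C.
Proof. by rewrite out_entry; apply: eq_bigr => c _; rewrite andbb. Qed.

Lemma rho_ge0 z i : 0 <= output_state Ualg T z i i.
Proof. by rewrite rho_ii; apply: sumr_ge0 => c _; rewrite mulr_ge0 ?ler0n ?ler0c. Qed.

Lemma sumB_enum z (B : pred K) :
  \sum_i (B (enum_val i))%:R * output_state Ualg T z i i =
  \sum_c (p c)%:C%C * (B (kap z T c))%:R.
Proof.
under eq_bigr => i _ do rewrite rho_ii mulr_sumr.
rewrite exchange_big /=; apply: eq_bigr => c _.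
rewrite -(pick_enum (fun k => (p c)%:C%C * (B k)%:R) (kap z T c)).
by apply: eq_bigr => i _; rewrite mulrCA [_ * (B _)%:R]mulrC.
Qed.

Lemma sub_entry m (A B : 'M[C]_m) i j : (A - B) i j = A i j - B i j.
Proof. by rewrite !mxE. Qed.

Lemma dist_bound x y (good : pred 'I_b.+1) :
  (forall c, good c -> Ast x c T != Ast y c T) ->
  (1/2 : R) <= \sum_c (good c)%:R * p c ->
  1/6 <= trace_dist (output_state Ualg T x) (output_state Ualg T y).
Proof.
move=> Hd Hm.
set D := output_state Ualg T x - output_state Ualg T y.
have Ddiag : forall i j, i != j -> D i j = 0.
  move=> i j ij.
  have F : forall z c, ((enum_val i == kap z T c) && (enum_val j == kap z T c)) = false.
    move=> z c; apply/negbTE; apply/negP => /andP [/eqP E1 /eqP E2].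
    by move/eqP: ij; apply; apply: enum_val_inj; rewrite E1 E2.
  rewrite /D sub_entry !out_entry.
  by rewrite !big1 ?subr0 // => c _; rewrite F mul0r.
set B : pred K := fun k => [exists c, good c && (k == kap x T c)].
have Bx c : good c -> B (kap x T c) by move=> gc; apply/existsP; exists c; rewrite gc eqxx.
have By c : B (kap y T c) = false.
  apply/negbTE/existsP => [[c' /andP [gc' /eqP E]]].
  have := congr1 snd E; rewrite /kap /= => /encW_inj [Ec EA]; subst c'.
  by move: (Hd c gc'); rewrite EA eqxx.
have tn : (\sum_c (good c)%:R * p c)%:C%C <= trace_norm D.
  rewrite trace_norm_diag //.
  apply: (@le_trans _ _ (\sum_i (B (enum_val i))%:R * D i i)); last first.
    apply: ler_sum => i _; case: (B (enum_val i)); rewrite ?mul1r ?mul0r //.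
    apply: real_ler_norm; rewrite /D sub_entry; apply: rpredB; exact/ger0_real/rho_ge0.
  rewrite /D (eq_bigr (fun i => (B (enum_val i))%:R * output_state Ualg T x i i - (B (enum_val i))%:R * output_state Ualg T y i i)); last by move=> i _; rewrite sub_entry mulrBr.
  rewrite sumrB !sumB_enum [X in _ - X]big1 ?subr0; last by move=> c _; rewrite By mulr0.
  rewrite rmorph_sum; apply: ler_sum => c _ /=.
  case gc: (good c); last by rewrite mul0r rmorph0 mulr_ge0 ?ler0n ?ler0c.
  by rewrite (Bx c gc) mul1r mulr1.
rewrite /trace_dist -/D.
apply: (@le_trans _ _ ((\sum_c (good c)%:R * p c) / 2)%:C%C); last first.
  rewrite fmorph_div rmorph_nat; by rewrite ler_pM2r ?invr_gt0 ?ltr0n.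
have -> : (1/6 : C) = ((1/6 : R))%:C%C by rewrite fmorph_div rmorph1 rmorph_nat.
rewrite lecR; lra.
Qed.

End Sim.

Lemma In_nth (X : Type) (x0 : X) (s : seq X) i : (i < size s)%N -> List.In (nth x0 s i) s.
Proof.
elim: s i => [|x s IH] [|i] //= H; [by left | right; exact: IH].
Qed.

Lemma diff_lemma n (t : dtree n) x y :
  dt_eval t (sabotage x y symstar) != dt_eval t (sabotage x y symdag) ->
  exists2 s, (s < dt_cost t (sabotage x y symstar))%N & trueans t x s != trueans t y s.
Proof.
elim: t => [c|i k IH] /=; first by rewrite eqxx.
rewrite !ffunE; case: (eqVneq (x i) (y i)) => [E|E] H.
  have [s s1 s2] := IH _ H; exists s.+1 => //=.
  by rewrite -E.
by exists 0%N.
Qed.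

Lemma sym_ne0 : (sym0 == symstar) = false. Proof. by apply/eqP. Qed.
Lemma sym_ne1 : (sym1 == symstar) = false. Proof. by apply/eqP. Qed.
Lemma sym_ned : (symdag == symstar) = false. Proof. by apply/eqP. Qed.

Fixpoint scan n (l : seq 'I_n) : dtree n :=
  match l with
  | [::] => Leaf n false
  | i :: l' => Query i (fun s => match s with
                                 | symstar => Leaf n true
                                 | symdag => Leaf n false
                                 | _ => scan l' end)
  end.

Lemma scan_star n (l : seq 'I_n) (z : {ffun 'I_n -> sym}) : (forall i, z i != symdag) ->
  dt_eval (scan l) z = has (fun i => z i == symstar) l.
Proof.
move=> H; elim: l => [|i l IH] //=.
case E: (z i) => /=; rewrite ?sym_ne0 ?sym_ne1 ?sym_ned ?eqxx ?IH //.
by move: (H i); rewrite E eqxx.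
Qed.

Lemma scan_dag n (l : seq 'I_n) (z : {ffun 'I_n -> sym}) : (forall i, z i != symstar) ->
  dt_eval (scan l) z = false.
Proof.
move=> H; elim: l => [|i l IH] //=.
case E: (z i) => //=; by move: (H i); rewrite E eqxx.
Qed.

Lemma scan_correct n (D : {set {ffun 'I_n -> bool}}) f z :
  z \in sab_domain D f -> dt_eval (scan (enum 'I_n)) z = f_sab z.
Proof.
rewrite inE => /existsP [x /andP [xD /existsP [y /andP [yD /andP [fxy /orP [/eqP -> | /eqP ->]]]]]].
- rewrite scan_star; last by move=> i; rewrite ffunE; case: (x i == y i); [case: (x i)|]; apply/eqP.
  rewrite /f_sab; apply/hasP/existsP => [[i _ H]|[i H]]; first by exists i.
  by exists i; rewrite ?mem_enum.
- rewrite scan_dag; last by move=> i; rewrite ffunE; case: (x i == y i); [case: (x i)|]; apply/eqP.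
  rewrite /f_sab; apply/esym/negbTE/existsPn => i; rewrite ffunE.
  by case: (x i == y i); [case: (x i)|]; apply/eqP.
Qed.

Lemma exists_alg (R : realType) n (D : {set {ffun 'I_n -> bool}}) f :
  zero_error_alg [:: ((1 : R), scan (enum 'I_n))] (sab_domain D f) (@f_sab n).
Proof.
split; [|split].
- by move=> q [<-|[]] //=.
- by rewrite big_cons big_nil addr0.
- move=> q [<-|[]] //= _ z zD; exact: scan_correct zD.
Qed.

Lemma key (R : realType) n (D : {set {ffun 'I_n -> bool}}) f (A : rand_alg R n) :
  zero_error_alg A (sab_domain D f) (@f_sab n) ->
  QS_algorithm_exists R D f (Num.truncn (2 * worst_expected_cost A (sab_domain D f))).
Proof.
case=> [Hp [Hs Hc]].
set dom := sab_domain D f.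
set E := worst_expected_cost A dom.
set T := Num.truncn (2 * E).
have E0 : 0 <= E by exact: bigmax_ge_id.
have /andP [T1 T2] : (T%:R <= 2 * E) && (2 * E < T.+1%:R).
  by apply: truncn_itv; rewrite mulr_ge0.
have szA : (0 < size A)%N.
  case: A Hs {Hp Hc E E0 T T1 T2} => //; rewrite big_nil => /eqP; by rewrite eq_sym oner_eq0.
set b := (size A).-1.
have hb : size A = b.+1 by rewrite prednK.
set d := ((0 : R), Leaf n true).
pose tr (v : 'I_b.+1) := (nth d A v).2; pose p (v : 'I_b.+1) := (nth d A v).1.
have seqord : forall F : R * dtree n -> R, \sum_(q <- A) F q = \sum_(v < b.+1) F (nth d A v).
  by move=> F; rewrite (big_nth d) hb big_mkord.
have Hin : forall v : 'I_b.+1, List.In (nth d A v) A.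
  by move=> v; apply: In_nth; rewrite hb ltn_ord.
have p0 : forall v, 0 <= p v by move=> v; exact: Hp _ (Hin v).
have p1 : \sum_v p v = 1 by rewrite -Hs seqord.
exists (aW T b), b, (@Ualg R n T b tr p).
split; first by move=> t _; exact: Ualg_unitary p0 p1 t.
move=> x y xD yD fxy.
set ps := sabotage x y symstar; set pd := sabotage x y symdag.
have psD : ps \in dom.
  rewrite inE; apply/existsP; exists x; rewrite xD /=; apply/existsP; exists y.
  by rewrite yD fxy eqxx.
have pdD : pd \in dom.
  rewrite inE; apply/existsP; exists x; rewrite xD /=; apply/existsP; exists y.
  by rewrite yD fxy eqxx orbT.
have fs : f_sab ps = true.
  have [i xi] : exists i, x i != y i.
    case: (boolP [exists i, x i != y i]) => [/existsP //|/existsPn H].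
    suff xy : x = y by move: fxy; rewrite xy eqxx.
    by apply/ffunP => i; move: (H i); rewrite negbK => /eqP.
  by apply/existsP; exists i; rewrite /ps ffunE (negbTE xi).
have fd : f_sab pd = false.
  apply/negbTE/existsPn => i; rewrite /pd ffunE.
  by case: (x i == y i); [case: (x i)|]; apply/eqP.
pose good v := (0 < p v) && (dt_cost (tr v) ps <= T)%N.
apply: (dist_bound p0 (good := good)).
- move=> c /andP [pc cc].
  have e1 := Hc _ (Hin c) pc ps psD; have e2 := Hc _ (Hin c) pc pd pdD.
  have : dt_eval (tr c) ps != dt_eval (tr c) pd by rewrite /tr e1 e2 fs fd.
  case/diff_lemma => s s1 s2.
  have sT : (s < T)%N := leq_trans s1 cc.
  apply/negP => /eqP /ffunP /(_ (Ordinal sT)); rewrite !ffunE /= sT /= => E'.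
  by move: s2; rewrite E' eqxx.
- have Ecost : \sum_v p v * (dt_cost (tr v) ps)%:R <= E.
    have : expected_cost A ps <= E.
      by rewrite /E /worst_expected_cost; apply: le_bigmax_cond.
    by rewrite /expected_cost seqord.
  have Hk : forall v, (~~ good v)%:R * p v <= p v * (dt_cost (tr v) ps)%:R / T.+1%:R.
    move=> v; rewrite /good; case: (boolP (0 < p v)) => pv /=.
      case: leqP => c /=.
        by rewrite mul0r divr_ge0 ?mulr_ge0 ?ler0n.
      rewrite mul1r ler_pdivlMr ?ltr0n //; apply: ler_wpM2l; first exact: p0.
      by rewrite ler_nat.
    have -> : p v = 0 by apply/le_anti; rewrite p0 andbT leNgt.
    by rewrite !mulr0 !mul0r.
  have Hsplit : \sum_v p v = \sum_v (good v)%:R * p v + \sum_v (~~ good v)%:R * p v.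
    rewrite -big_split; apply: eq_bigr => v _; by case: (good v); rewrite /= ?mul1r ?mul0r ?addr0 ?add0r.
  have H1 : \sum_v (~~ good v)%:R * p v <= (\sum_v p v * (dt_cost (tr v) ps)%:R) / T.+1%:R.
    rewrite mulr_suml; exact: ler_sum => v _.
  have H2 : (\sum_v p v * (dt_cost (tr v) ps)%:R) / T.+1%:R <= E / T.+1%:R.
    by rewrite ler_pM2r ?invr_gt0 ?ltr0n.
  have H3 : E / T.+1%:R < 1/2.
    rewrite ltr_pdivrMr ?ltr0n //; lra.
  have H4 := le_lt_trans H1 (le_lt_trans H2 H3).
  move: H4 Hsplit; rewrite p1; set X := \sum_v (good v)%:R * p v; set Y := \sum_v (~~ good v)%:R * p v; lra.
Qed.

Unset Implicit Arguments.
Set Strict Implicit.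

Theorem corollary11 (R : realType) :
  exists c : R, 0 < c /\
    forall (n : nat) (D : {set {ffun 'I_n -> bool}})
           (f : {ffun 'I_n -> bool} -> bool),
      QS R D f <= c * RS R D f.
Proof.
exists 2; split => // n D f.
suff H : QS R D f / 2 <= RS R D f by lra.
rewrite /RS /R0; apply: lb_le_inf.
  exists (worst_expected_cost [:: ((1 : R), scan (enum 'I_n))] (sab_domain D f)).
  by exists [:: ((1 : R), scan (enum 'I_n))] => //; exact: exists_alg.
move=> _ [A HA <-].
have HQ := key HA.
set E := worst_expected_cost A (sab_domain D f) in HQ *.
have E0 : 0 <= E by exact: bigmax_ge_id.
have T1 : (Num.truncn (2 * E))%:R <= 2 * E by rewrite truncn_le mulr_ge0.
suff : QS R D f <= (Num.truncn (2 * E))%:R by lra.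
rewrite /QS; apply: ge_inf.
  by exists 0 => _ [T _ <-]; exact: ler0n.
by exists (Num.truncn (2 * E)).
Qed.
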